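(* Let $m,n,a$ be natural numbers with $n\geq 1$, $m\geq 1$ and $1\leq a\leq 9$. Then the equation $$C_n = a\left(\frac{10^m-1}{9}\right)$$ holds if and only if $(m,n,a)\in\{(1,1,3),(2,3,9)\}$. That is, the only Lucas-balancing numbers $C_n$ with $n\ge 1$ that are decimal repdigits are $C_1=3$ and $C_3=99$.
   Context: The Lucas-balancing sequence $(C_n)_{n\geq 0}$ is defined by $C_0=1$, $C_1=3$ and $C_{n+1}=6C_n-C_{n-1}$ for $n\geq 1$. For $1\le a\le 9$ and $m\ge 1$, the number $a\frac{10^m-1}{9}$ is the decimal integer consisting of $m$ copies of the digit $a$. *)

(* Defs.v *)
From mathcomp Require Import all_boot.

(* The truncated nat subtraction is harmless
   since 6 * C (n+1) > C n for all n (the sequence is increasing). *)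
Fixpoint Cpair (n : nat) : nat * nat :=
  match n with
  | 0 => (1, 3)
  | n'.+1 => let: (x, y) := Cpair n' in (y, 6 * y - x)
  end.

Definition C (n : nat) : nat := (Cpair n).1.

Definition repdigit (a m : nat) : nat := a * ((10 ^ m - 1) %/ 9).

Lemma C0 : C 0 = 1. Proof. by []. Qed.
Lemma C1 : C 1 = 3. Proof. by []. Qed.
Lemma C3 : C 3 = 99. Proof. by []. Qed.

(* Main.v *)
Require Import Defs.
From Stdlib Require Import ZArith Lia.
From mathcomp Require Import all_boot.
From mathcomp Require Import zify.

Lemma Cpair_eq n : Cpair n = (C n, C n.+1).
Proof. rewrite /C /=; by case: (Cpair n). Qed.

Lemma CSS n : C n.+2 = 6 * C n.+1 - C n.
Proof. by rewrite {1}/C /= Cpair_eq. Qed.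

Lemma C_lt n : C n < C n.+1.
Proof.
elim: n => [|n IH]; first by [].
rewrite CSS; lia.
Qed.

Lemma C_rec n : C n.+2 + C n = 6 * C n.+1.
Proof. have := C_lt n; have := C_lt n.+1; rewrite CSS; lia. Qed.

Lemma C_mono n k : C n <= C (n + k).
Proof.
elim: k => [|k IH]; first by rewrite addn0.
rewrite addnS; apply: leq_trans IH _; exact: ltnW (C_lt _).
Qed.

Lemma Cmod_inv (M : nat) (S : seq (nat * nat)) : 0 < M ->
  (1 %% M, 3 %% M) \in S ->
  all (fun p => all (fun z => ((z + p.1) %% M == (6 * p.2) %% M) ==> ((p.2, z) \in S))
                    (iota 0 M)) S ->
  forall n, (C n %% M, C n.+1 %% M) \in S.
Proof.
move=> M0 H0 /allP Hall; elim=> [|n IH]; first exact: H0.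
have /allP := Hall _ IH => /= Hz.
have := Hz (C n.+2 %% M); rewrite mem_iota add0n ltn_pmod // => /(_ isT) /implyP; apply.
by rewrite modnDml modnDmr C_rec modnMmr.
Qed.

Lemma R_spec m : 9 * ((10 ^ m - 1) %/ 9) + 1 = 10 ^ m.
Proof.
have h9 : 9 %| 10 ^ m - 1.
  have h : 10 ^ m %% 9 = 1 by rewrite -modnXm (_ : 10 %% 9 = 1) // exp1n.
  apply/dvdnP; exists ((10 ^ m) %/ 9).
  have := divn_eq (10 ^ m) 9; rewrite h. lia.
rewrite mulnC divnK //; have : 0 < 10 ^ m by rewrite expn_gt0. lia.
Qed.

Lemma Cv1 : Z.of_nat (C 1) = 3%Z. Proof. vm_compute; reflexivity. Qed.
Lemma Cv2 : Z.of_nat (C 2) = 17%Z. Proof. vm_compute; reflexivity. Qed.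
Lemma Cv3 : Z.of_nat (C 3) = 99%Z. Proof. vm_compute; reflexivity. Qed.
Lemma Cv4 : Z.of_nat (C 4) = 577%Z. Proof. vm_compute; reflexivity. Qed.
Lemma Cv5 : Z.of_nat (C 5) = 3363%Z. Proof. vm_compute; reflexivity. Qed.
Lemma Cv6 : Z.of_nat (C 6) = 19601%Z. Proof. vm_compute; reflexivity. Qed.
Lemma Cv7 : Z.of_nat (C 7) = 114243%Z. Proof. vm_compute; reflexivity. Qed.
Lemma Rv1 : Z.of_nat ((10 ^ 1 - 1) %/ 9) = 1%Z. Proof. vm_compute; reflexivity. Qed.
Lemma Rv2 : Z.of_nat ((10 ^ 2 - 1) %/ 9) = 11%Z. Proof. vm_compute; reflexivity. Qed.
Lemma Rv3 : Z.of_nat ((10 ^ 3 - 1) %/ 9) = 111%Z. Proof. vm_compute; reflexivity. Qed.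
Lemma Rv4 : Z.of_nat ((10 ^ 4 - 1) %/ 9) = 1111%Z. Proof. vm_compute; reflexivity. Qed.
Lemma Rv5 : Z.of_nat ((10 ^ 5 - 1) %/ 9) = 11111%Z. Proof. vm_compute; reflexivity. Qed.

Theorem theorem3 (m n a : nat) :
  1 <= n -> 1 <= m -> 1 <= a <= 9 ->
  (C n = repdigit a m <->
   ((m, n, a) = (1, 1, 3) \/ (m, n, a) = (2, 3, 9))).
Proof.
move=> hn hm /andP[ha1 ha9]; split; last first.
  by case=> [[-> -> ->]|[-> -> ->]]; vm_compute.
rewrite /repdigit => H.
have H9 : 9 * C n + a = a * 10 ^ m.
  by rewrite H mulnA (mulnC 9) -mulnA -[X in _ + X]muln1 -mulnDr R_spec.
case: (leqP 6 m) => hm6.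
  have d64 : 64 %| 10 ^ m.
    by rewrite -(subnK hm6) expnD dvdn_mull.
  have e64 : (9 * (C n %% 64) + a) %% 64 = 0.
    have h : 64 %| 9 * C n + a by rewrite H9 dvdn_mull.
    move: h; rewrite /dvdn; lia.
  have e5 : (9 * (C n %% 5) + a) %% 5 = 0.
    have h : 5 %| 9 * C n + a by rewrite H9 dvdn_mull // -(subnK hm6) expnD dvdn_mull.
    move: h; rewrite /dvdn; lia.
  have P64 := @Cmod_inv 64 [:: (1,3); (3,17); (17,35); (35,1); (1,35); (35,17); (17,3); (3,1)] isT isT isT n.
  have P5 := @Cmod_inv 5 [:: (1,3); (3,2); (2,4); (4,2); (2,3); (3,1)] isT isT isT n.
  move: e64 e5 P64 P5; move: (C n %% 64) (C n.+1 %% 64) (C n %% 5) (C n.+1 %% 5) => x y u v.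
  rewrite !inE !xpair_eqE => e64 e5 P64 P5.
  have hx : (x == 1) || (x == 3) || (x == 17) || (x == 35).
    by move: P64; do 7 (case/orP; first by case/andP=> /eqP ->); case/andP=> /eqP ->.
  have hu : (u == 1) || (u == 3) || (u == 2) || (u == 4).
    by move: P5; do 5 (case/orP; first by case/andP=> /eqP ->); case/andP=> /eqP ->.
  clear P64 P5.
  lia.
have HZ := f_equal Z.of_nat H; rewrite Nat2Z.inj_mul in HZ.
case: (leqP 7 n) => hn7.
  have := C_mono 7 (n - 7); rewrite subnKC // => /leP /inj_le.
  rewrite Cv7 => hb.
  have hm5 : m <= 5 by lia.
  clear H H9 hm6.
  move: hm hm5 HZ; case: m => [|[|[|[|[|[|m]]]]]] // _ _; rewrite ?Rv1 ?Rv2 ?Rv3 ?Rv4 ?Rv5 => HZ; lia.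
have hm5 : m <= 5 by lia.
clear H H9 hm6.
move: hm hm5 HZ; case: m => [|[|[|[|[|[|m]]]]]] // _ _; rewrite ?Rv1 ?Rv2 ?Rv3 ?Rv4 ?Rv5 => HZ;
move: hn hn7 HZ; case: n => [|[|[|[|[|[|[|n]]]]]]] // _ _; rewrite ?Cv1 ?Cv2 ?Cv3 ?Cv4 ?Cv5 ?Cv6 => HZ;
first [ exfalso; lia | (have -> : a = 3 by lia); by left | (have -> : a = 9 by lia); by right ].
Qed.
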